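(* Let $\alpha=(a_1,\dots,a_w)$ have $m$ nonempty horizontal lists. (1) Let $a_i,a_j\in\mathbb{L}^t_\alpha$ with $a_i<a_j$. Then for every $1\le k<t$, the items $lm^k_\alpha(a_i)$, $lm^k_\alpha(a_j)$, $un^k_\alpha(a_i)$ and $un^k_\alpha(a_j)$ all lie in $\mathbb{L}^{t-k}_\alpha$. Moreover, $lm^k_\alpha(a_i)\le lm^k_\alpha(a_j)$ and $un^k_\alpha(a_i)\le un^k_\alpha(a_j)$ as values. (2) Let $a_i\in\mathbb{L}^t_\alpha$, and let $\beta=(a_{i_{t-1}},\dots,a_{i_1},a_{i_0})$, with $a_{i_0}=a_i$, be any increasing subsequence of $\alpha$ of length $t$ ending at $a_i$. Then for every $0\le k\le t-1$, the items $lm^k_\alpha(a_i)$, $a_{i_k}$ and $un^k_\alpha(a_i)$ lie in $\mathbb{L}^{t-k}_\alpha$, and $lm^k_\alpha(a_i)\ge a_{i_k}\ge un^k_\alpha(a_i)$. (3) Let $a_i\in\mathbb{L}^m_\alpha$. Among all longest increasing subsequences of $\alpha$ ending at $a_i$, the sequence $(lm^{m-1}_\alpha(a_i),\dots,lm^0_\alpha(a_i))$ has maximum weight and minimum gap. The sequence $(un^{m-1}_\alpha(a_i),\dots,un^0_\alpha(a_i))$ has minimum weight and maximum gap. (4) Let $a^m_h$ and $a^m_t$ be the first and last items of $\mathbb{L}^m_\alpha$. Then $(lm^{m-1}_\alpha(a^m_h),\dots,lm^0_\alpha(a^m_h))$ is a longest increasing subsequence of $\alpha$ of maximum weight. Also,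 $(un^{m-1}_\alpha(a^m_t),\dots,un^0_\alpha(a^m_t))$ is a longest increasing subsequence of $\alpha$ of minimum weight.
   Context: Let $\alpha=(a_1,\dots,a_w)$ be a finite sequence of real numbers, with items identified by their positions. Increasing subsequences are non-strict: indices strictly increase and values satisfy $\le$. $a_j$ is compatible with $a_i$ if $j<i$ and $a_j\le a_i$. $RL_\alpha(a)$ is the maximum length of an increasing subsequence ending at $a$. $a_j$ is a predecessor of $a_i$ if it is compatible with $a_i$ and $RL_\alpha(a_j)=RL_\alpha(a_i)-1$. The horizontal list $\mathbb{L}^t_\alpha$ is the list of items of rising length $t$, ordered by position; $m$ is the number of nonempty lists, which equals the length of a longest increasing subsequence. The up neighbor $un_\alpha(a_i)$ is the item $a_j$ with the largest $j<i$ and $RL_\alpha(a_j)=RL_\alpha(a_i)-1$. The leftmost child $lm_\alpha(a_i)$ is the predecessor of $a_i$ with smallest position. Further, $un^0_\alpha(a)=lm^0_\alpha(a)=a$, $un^k_\alpha=un_\alpha\circ un^{k-1}_\alpha$, and $lm^k_\alpha=lm_\alpha\circ lm^{k-1}_\alpha$. For an increasing subsequence $s$, its weight is the sum of its items, and its gap is (last item) $-$ (first item). *)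

(* Defs.v *)
From HB Require Import structures.
From mathcomp Require Import all_boot all_order all_algebra.
Set Implicit Arguments. Unset Strict Implicit. Unset Printing Implicit Defensive.
Import Order.TTheory GRing.Theory Num.Theory.
Local Open Scope ring_scope.

Section LIS.
Variable R : realDomainType.
Variable alpha : seq R.

(* Items are identified by their (0-based) positions. *)
Definition itm (i : nat) : R := nth 0 alpha i.

Definition positions : seq nat := iota 0 (size alpha).

(* An increasing (non-strict) subsequence, given by its strictly increasing
   list of positions. *)
Definition incr_sub (s : seq nat) : bool :=
  subseq s positions && sorted (fun j k => itm j <= itm k) s.

Definition ends_at (s : seq nat) (i : nat) : bool :=
  (s != [::]) && (last 0%N s == i).

Definition compat (j i : nat) : bool := (j < i)%N && (itm j <= itm i).

Definition RL (i : nat) : nat :=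
  \max_(b : (size alpha).-tuple bool |
          incr_sub (mask b positions) && ends_at (mask b positions) i)
     size (mask b positions).

Definition is_pred (j i : nat) : bool := compat j i && (RL j + 1 == RL i)%N.

Definition L (t : nat) : seq nat := [seq i <- positions | RL i == t].

(* number of nonempty horizontal lists (RL values range in 1..w) *)
Definition mlists : nat :=
  size [seq t <- iota 1 (size alpha) | L t != [::]].

Definition un (i : nat) : nat :=
  last i [seq j <- iota 0 i | (RL j + 1 == RL i)%N].

Definition lm (i : nat) : nat :=
  head i [seq j <- iota 0 i | is_pred j i].

Definition weight (s : seq nat) : R := \sum_(j <- s) itm j.
Definition gap (s : seq nat) : R := itm (last 0%N s) - itm (head 0%N s).

Definition chain (f : nat -> nat) (n i : nat) : seq nat :=
  [seq iter (n - 1 - k) f i | k <- iota 0 n].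

End LIS.

(* Main.v *)
Require Import Defs.
From HB Require Import structures.
From mathcomp Require Import all_boot all_order all_algebra.
From mathcomp Require Import zify.
Import Order.TTheory GRing.Theory Num.Theory.

Lemma subseq_iotaE (s : seq nat) n :
  subseq s (iota 0 n) = sorted ltn s && all (fun x => x < n) s.
Proof.
apply/idP/andP => [H|[Hs Ha]].
  split; first exact: (subseq_sorted ltn_trans H (iota_ltn_sorted 0 n)).
  by apply/allP => x /(mem_subseq H); rewrite mem_iota.
apply/(subseq_uniqP (iota_uniq 0 n)).
apply: (irr_sorted_eq ltn_trans ltnn Hs).
  exact: (sorted_filter ltn_trans _ (iota_ltn_sorted 0 n)).
move=> x; rewrite mem_filter mem_iota /=; case E: (x \in s) => //=.
by have := allP Ha x E.
Qed.

Lemma head_min (s : seq nat) d x : sorted ltn s -> x \in s -> head d s <= x.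
Proof.
case: s => //= h t Hs; rewrite inE => /orP[/eqP -> //|xt].
by have /allP := order_path_min ltn_trans Hs; move=> /(_ x xt) /ltnW.
Qed.

Lemma last_max (s : seq nat) d x : sorted ltn s -> x \in s -> x <= last d s.
Proof.
case: s => //= h t; elim: t h x => [|y t IH] h x /=.
  by move=> _; rewrite inE => /eqP ->.
move=> /andP[hy Hs]; rewrite inE => /orP[/eqP ->|xt].
  apply: leq_trans (ltnW hy) _; apply: IH => //; exact: mem_head.
exact: IH.
Qed.

Lemma filter_iota_sorted p i : sorted ltn [seq j <- iota 0 i | p j].
Proof. exact: (sorted_filter ltn_trans _ (iota_ltn_sorted 0 i)). Qed.

Section S.
Set Implicit Arguments. Unset Strict Implicit.
Variable R : realDomainType.
Variable alpha : seq R.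
Local Notation a := (itm alpha).
Local Notation n := (size alpha).
Local Notation RL := (RL alpha).
Definition rr := fun j k => (j < k) && (a j <= a k)%R.

Lemma rr_trans : transitive rr.
Proof.
move=> y x z /andP[h1 h2] /andP[h3 h4]; apply/andP; split.
  exact: ltn_trans h1 h3.
exact: le_trans h2 h4.
Qed.

Lemma incrE s : incr_sub alpha s = sorted rr s && all (fun x => x < n) s.
Proof.
rewrite /incr_sub /positions subseq_iotaE.
rewrite (_ : rr = [rel x y | ltn x y && (a x <= a y)%R]) // sorted_relI.
by rewrite -!andbA; congr (_ && _); rewrite andbC.
Qed.

Lemma RL_ge s i : incr_sub alpha s -> ends_at s i -> size s <= RL i.
Proof.
move=> H E; have /andP[/subseqP[m sm Es] _] := H.
have sm' : size m == n by rewrite sm size_iota.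
rewrite /Defs.RL. pose t0 : n.-tuple bool := Tuple sm'.
have := @leq_bigmax_cond _ (fun b : n.-tuple bool => incr_sub alpha (mask b (positions alpha))
   && ends_at (mask b (positions alpha)) i) (fun b : n.-tuple bool => size (mask b (positions alpha))) t0.
by rewrite /t0 /= -Es H E; apply.
Qed.

Lemma ends_mem s i : ends_at s i -> i \in s.
Proof.
case: s => //= x s /andP[_ /eqP <-]; exact: mem_last.
Qed.

Lemma RL_wit i : 0 < RL i ->
  exists s, [/\ incr_sub alpha s, ends_at s i & size s = RL i].
Proof.
rewrite /Defs.RL.
case: (pickP (fun b : n.-tuple bool => incr_sub alpha (mask b (positions alpha))
             && ends_at (mask b (positions alpha)) i)) => [b0 Pb0 | none]; last first.
  by rewrite big_pred0.
rewrite (bigop.bigmax_eq_arg b0) //.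
case: arg_maxnP => // b /andP[H1 H2] _ _.
by exists (mask b (positions alpha)).
Qed.

Lemma RL_size i : 0 < RL i -> i < n.
Proof.
case/RL_wit => s [H E _]; have := ends_mem E.
by rewrite incrE in H; case/andP: H => _ /allP H /H.
Qed.

Lemma RL_pos i : i < n -> 0 < RL i.
Proof.
move=> Hi; apply: (@leq_trans (size [:: i])) => //.
apply: RL_ge; last by rewrite /ends_at /=.
by rewrite incrE /= Hi.
Qed.

Lemma RL_compat j i : compat alpha j i -> i < n -> RL j + 1 <= RL i.
Proof.
move=> /andP[ji aji] iN.
have jN : j < n by apply: ltn_trans ji iN.
have [s [H E S]] := RL_wit (RL_pos jN).
rewrite -S addn1 -(size_rcons s i); apply: RL_ge; last first.
  by rewrite /ends_at last_rcons eqxx; case: s {H E S}.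
move: H E; rewrite !incrE all_rcons iN /= => /andP[Hs ->]; rewrite andbT.
case: s Hs {S} => //= x s Hs /andP[_ /eqP /= El].
by rewrite rcons_path Hs El /rr ji aji.
Qed.

Lemma RL_pred i : 1 < RL i -> exists j, is_pred alpha j i.
Proof.
move=> H1; have [s [H E S]] := RL_wit (ltnW H1).
case/lastP: s H E S => [|p x]; first by [].
rewrite /ends_at last_rcons => H /andP[_ /eqP Ex]; subst x.
case/lastP: p H => [|q j]; first by move=> _ /= S; rewrite -S in H1.
move=> H S; exists j.
have Hq : incr_sub alpha (rcons q j).
  move: H; rewrite !incrE all_rcons => /andP[Hs /andP[_ ->]]; rewrite andbT.
  exact: (subseq_sorted rr_trans (subseq_rcons (rcons q j) i) Hs).
have cj : compat alpha j i.
  move: H; rewrite incrE => /andP[Hs _].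
  case: q Hs {Hq S} => [|y q] /=; first by rewrite andbT.
  by rewrite rcons_path last_rcons => /andP[_].
have iN : i < n by apply: RL_size; apply: ltnW.
have Hj : size (rcons q j) <= RL j.
  by apply: (RL_ge Hq); rewrite /ends_at last_rcons eqxx; case: q {H Hq S}.
rewrite /is_pred cj /= eqn_leq RL_compat //= -S !size_rcons addn1 ltnS.
by rewrite size_rcons in Hj.
Qed.

Lemma same_list_lt j i : RL j = RL i -> 0 < RL i -> j < i -> (a i < a j)%R.
Proof.
move=> E P ji; rewrite ltNge; apply/negP => aji.
have := RL_compat (j:=j) (i:=i); rewrite /compat ji aji E RL_size //.
by move=> /(_ isT isT); rewrite addn1 ltnn.
Qed.

Lemma same_list_le j i : RL j = RL i -> 0 < RL i -> j <= i -> (a i <= a j)%R.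
Proof.
move=> E P; rewrite leq_eqVlt => /orP[/eqP -> //| ji].
exact/ltW/same_list_lt.
Qed.

Lemma same_list_pos j i : RL j = RL i -> 0 < RL i -> (a j <= a i)%R -> i <= j.
Proof.
move=> E P aji; rewrite leqNgt; apply/negP => ij.
have P2 : 0 < RL j by rewrite E.
by have := same_list_lt E P ij; rewrite ltNge aji.
Qed.

Local Notation lm := (lm alpha).
Local Notation un := (un alpha).

Lemma lm_pred i : 1 < RL i -> is_pred alpha (lm i) i.
Proof.
move=> H; have [j Pj] := RL_pred H.
have ji : j < i by case/andP: Pj => /andP[].
have : j \in [seq j <- iota 0 i | is_pred alpha j i] by rewrite mem_filter Pj mem_iota.
rewrite /Defs.lm; case E: [seq _ <- _ | _] => [|h t] //= _.
have : h \in [seq j <- iota 0 i | is_pred alpha j i] by rewrite E mem_head.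
by rewrite mem_filter => /andP[].
Qed.

Lemma lm_min i y : is_pred alpha y i -> lm i <= y.
Proof.
move=> Py; have yi : y < i by case/andP: Py => /andP[].
apply: head_min; first exact: filter_iota_sorted.
by rewrite mem_filter Py mem_iota.
Qed.

Lemma is_pred_lt j i : is_pred alpha j i -> j < i.
Proof. by case/andP => /andP[]. Qed.

Lemma is_pred_RL j i : is_pred alpha j i -> RL j + 1 = RL i.
Proof. by case/andP => _ /eqP. Qed.

Lemma is_pred_le j i : is_pred alpha j i -> (a j <= a i)%R.
Proof. by case/andP => /andP[]. Qed.

Lemma lm_best i y : 1 < RL i -> RL y + 1 = RL i -> (a y <= a i)%R ->
  (a y <= a (lm i))%R.
Proof.
move=> H Ey ay; have lp := lm_pred H.
have Ry : 0 < RL y by move: H; rewrite -Ey addn1 ltnS.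
case: (ltnP y (lm i)) => [ylt | lmy].
  have Py : is_pred alpha y i.
    by rewrite /is_pred /compat (ltn_trans ylt (is_pred_lt lp)) ay Ey eqxx.
  by have := lm_min Py; rewrite leqNgt ylt.
apply: same_list_le => //; apply/eqP; rewrite -(eqn_add2r 1) Ey.
by rewrite (is_pred_RL lp).
Qed.

Lemma un_in i : 1 < RL i -> un i < i /\ RL (un i) + 1 = RL i.
Proof.
move=> H; have [j Pj] := RL_pred H.
have : j \in [seq j <- iota 0 i | RL j + 1 == RL i].
  by rewrite mem_filter (is_pred_RL Pj) eqxx mem_iota (is_pred_lt Pj).
rewrite /Defs.un; case E: [seq _ <- _ | _] => [|h t] //= _.
have : last h t \in [seq j <- iota 0 i | RL j + 1 == RL i] by rewrite E mem_last.
by rewrite mem_filter mem_iota => /andP[/eqP -> /andP[_ ->]].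
Qed.

Lemma un_max i y : y < i -> RL y + 1 = RL i -> y <= un i.
Proof.
move=> yi Ey; apply: last_max; first exact: filter_iota_sorted.
by rewrite mem_filter Ey eqxx mem_iota.
Qed.

Lemma un_best i y : 1 < RL i -> y < i -> RL y + 1 = RL i -> (a (un i) <= a y)%R.
Proof.
move=> H yi Ey; have [ui Eu] := un_in H.
have Ry : 0 < RL (un i) by move: H; rewrite -Eu addn1 ltnS.
apply: same_list_le => //; last exact: un_max.
by apply/eqP; rewrite -(eqn_add2r 1) Ey Eu.
Qed.

Lemma un_compat i : 1 < RL i -> compat alpha (un i) i.
Proof.
move=> H; have [ui Eu] := un_in H; have [j Pj] := RL_pred H.
rewrite /compat ui /=; apply: le_trans (is_pred_le Pj).
exact: un_best (is_pred_lt Pj) (is_pred_RL Pj).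
Qed.

Lemma iter_RL (f : nat -> nat) :
  (forall x, 1 < RL x -> RL (f x) + 1 = RL x) ->
  forall i t k, RL i = t -> k < t -> RL (iter k f i) = t - k.
Proof.
move=> Hf i t k Ei; elim: k => [|k IH] kt; first by rewrite subn0.
rewrite iterS; have IHk := IH (ltnW kt).
have : RL (f (iter k f i)) + 1 = RL (iter k f i) by apply: Hf; rewrite IHk; lia.
rewrite IHk; lia.
Qed.

Lemma lm_RL x : 1 < RL x -> RL (lm x) + 1 = RL x.
Proof. by move=> H; apply: is_pred_RL (lm_pred H). Qed.

Lemma un_RL x : 1 < RL x -> RL (un x) + 1 = RL x.
Proof. by move=> H; case: (un_in H). Qed.

Lemma mono_iter x y t k : RL x = t -> RL y = t -> (a x <= a y)%R -> k < t ->
  (a (iter k lm x) <= a (iter k lm y))%R /\ (a (iter k un x) <= a (iter k un y))%R.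
Proof.
move=> Ex Ey axy; elim: k => [|k IH] kt //=.
have [IH1 IH2] := IH (ltnW kt).
have RLX := iter_RL lm_RL Ex (ltnW kt); have RLY := iter_RL lm_RL Ey (ltnW kt).
have RUX := iter_RL un_RL Ex (ltnW kt); have RUY := iter_RL un_RL Ey (ltnW kt).
set X := iter k lm x in IH1 RLX *; set Y := iter k lm y in IH1 RLY *.
set U := iter k un x in IH2 RUX *; set V := iter k un y in IH2 RUY *.
split.
  have H1 : 1 < RL X by rewrite RLX; lia.
  have H2 : 1 < RL Y by rewrite RLY; lia.
  apply: lm_best => //; first by rewrite lm_RL // RLX RLY.
  apply: le_trans IH1; exact: is_pred_le (lm_pred H1).
have H1 : 1 < RL U by rewrite RUX; lia.
have H2 : 1 < RL V by rewrite RUY; lia.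
have VU : V <= U by apply: same_list_pos => //; [rewrite RUX RUY | lia].
apply: un_best => //; first by apply: leq_trans VU; case: (un_in H2).
by rewrite un_RL // RUX RUY.
Qed.

Section Seq.
Variables (s : seq nat) (i t : nat).
Hypotheses (Hs : incr_sub alpha s) (St : size s = t) (Es : ends_at s i) (Ri : RL i = t).

Lemma seq_rr q : q.+1 < t -> rr (nth 0 s q) (nth 0 s q.+1).
Proof.
move: Hs; rewrite incrE => /andP[/sortedP H _] qt; apply: H; by rewrite St.
Qed.

Lemma seq_N q : q < t -> nth 0 s q < n.
Proof.
move: Hs; rewrite incrE => /andP[_ /allP H] qt; apply: H; apply: mem_nth; by rewrite St.
Qed.

Lemma seq_step q : q.+1 < t -> RL (nth 0 s q) + 1 <= RL (nth 0 s q.+1).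
Proof. move=> qt; apply: RL_compat; [exact: seq_rr | exact: seq_N]. Qed.

Lemma seq_last : nth 0 s (t - 1) = i.
Proof.
move: Es; rewrite /ends_at => /andP[_ /eqP <-]; by rewrite -nth_last St subn1.
Qed.

Lemma seq_RL q : q < t -> RL (nth 0 s q) = q.+1.
Proof.
move=> qt; apply/eqP; rewrite eqn_leq; apply/andP; split; last first.
  elim: q qt => [|q IH] qt; first exact: RL_pos (seq_N qt).
  have := seq_step qt; have := IH (ltnW qt); lia.
have H : forall d, d < t -> RL (nth 0 s (t - 1 - d)) + d <= t.
  elim => [|d IH] dt; first by rewrite subn0 seq_last Ri addn0.
  have E : (t - 1 - d.+1).+1 = t - 1 - d by lia.
  have := seq_step (q := t - 1 - d.+1); rewrite E => /(_ ltac:(lia)).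
  have := IH (ltnW dt); lia.
have := H (t - 1 - q) ltac:(lia); rewrite (_ : t - 1 - (t - 1 - q) = q); lia.
Qed.

Lemma seq_iter k : k <= t - 1 ->
  (a (nth 0 s (t - 1 - k)) <= a (iter k lm i))%R /\
  (a (iter k un i) <= a (nth 0 s (t - 1 - k)))%R.
Proof.
have t0 : 0 < t by move: Es; rewrite /ends_at -St; case: (s).
elim: k => [|k IH] kt; first by rewrite subn0 seq_last.
have [IH1 IH2] := IH (ltnW kt).
have RX := iter_RL lm_RL Ri (k := k) ltac:(lia).
have RU := iter_RL un_RL Ri (k := k) ltac:(lia).
have E : (t - 1 - k.+1).+1 = t - 1 - k by lia.
have rq := seq_rr (q := t - 1 - k.+1) ltac:(lia); rewrite E in rq.
case/andP: rq => lt1 le1.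
have R1 := seq_RL (q := t - 1 - k.+1) ltac:(lia).
have R0 := seq_RL (q := t - 1 - k) ltac:(lia).
rewrite /=; split.
  apply: lm_best; first by rewrite RX; lia.
    by rewrite R1 RX; lia.
  exact: le_trans le1 IH1.
have U1 : 1 < RL (iter k un i) by rewrite RU; lia.
have ikU : nth 0 s (t - 1 - k) <= iter k un i.
  by apply: same_list_pos => //; [rewrite RU R0; lia | rewrite R0].
apply: un_best => //; first exact: leq_trans lt1 ikU.
by rewrite R1 RU; lia.
Qed.
End Seq.

Lemma size_chain f m x : size (chain f m x) = m.
Proof. by rewrite /chain size_map size_iota. Qed.

Lemma nth_chain f m x q : q < m -> nth 0 (chain f m x) q = iter (m - 1 - q) f x.
Proof. by move=> qm; rewrite /chain (nth_map 0) ?size_iota // nth_iota. Qed.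


Lemma chain_ends f i m : 0 < m -> ends_at (chain f m i) i.
Proof.
move=> m0.
have E : m.-1 < m by lia.
rewrite /ends_at -nth_last size_chain (nth_chain _ _ E).
have -> : m - 1 - m.-1 = 0 by lia.
by rewrite /= eqxx andbT -size_eq0 size_chain -lt0n.
Qed.

Lemma chain_props f i m :
  (forall x, 1 < RL x -> RL (f x) + 1 = RL x) ->
  (forall x, 1 < RL x -> compat alpha (f x) x) ->
  RL i = m -> 0 < m ->
  [/\ incr_sub alpha (chain f m i), size (chain f m i) = m & ends_at (chain f m i) i].
Proof.
move=> HR Hc Ei m0; split.
- rewrite incrE; apply/andP; split.
    apply/(sortedP 0) => q; rewrite size_chain => qm.
    rewrite !nth_chain; try lia.
    rewrite (_ : m - 1 - q = (m - 1 - q.+1).+1); last lia.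
    rewrite iterS; apply: Hc; rewrite (iter_RL HR Ei); lia.
  apply/allP => x /mapP[k]; rewrite mem_iota => /andP[_ km] ->.
  apply: RL_size; rewrite (iter_RL HR Ei); lia.
- by rewrite size_chain.
- exact: chain_ends.
Qed.

Lemma RL_le_n x : RL x <= n.
Proof.
case: (posnP (RL x)) => [-> //|H]; have [s [Hs _ <-]] := RL_wit H.
case/andP: Hs => /size_subseq; by rewrite size_iota.
Qed.

Lemma RL_out x : n <= x -> RL x = 0.
Proof. by move=> H; case: (posnP (RL x)) => // /RL_size; rewrite ltnNge H. Qed.

Lemma weight_le (s1 s2 : seq nat) : size s1 = size s2 ->
  (forall q, q < size s1 -> (a (nth 0 s1 q) <= a (nth 0 s2 q))%R) ->
  (weight alpha s1 <= weight alpha s2)%R.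
Proof.
move=> E H; rewrite /weight (big_nth 0%N) [X in (_ <= X)%R](big_nth 0%N) -E !big_seq; apply: ler_sum => q.
by rewrite mem_index_iota => /andP[_ /H].
Qed.


Lemma lm_compat x : 1 < RL x -> compat alpha (lm x) x.
Proof. by move=> H; case/andP: (lm_pred H). Qed.

Lemma gapE s i : ends_at s i -> gap alpha s = (a i - a (nth 0 s 0))%R.
Proof. by rewrite /ends_at /gap nth0 => /andP[_ /eqP ->]. Qed.

Lemma chain_best s i t : RL i = t -> incr_sub alpha s -> size s = t -> ends_at s i ->
  [/\ (weight alpha s <= weight alpha (chain lm t i))%R,
      (weight alpha (chain un t i) <= weight alpha s)%R,
      (gap alpha (chain lm t i) <= gap alpha s)%R &
      (gap alpha s <= gap alpha (chain un t i))%R].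
Proof.
move=> Ri Hs St Es.
have t0 : 0 < t by move: Es; rewrite /ends_at -St; case: (s).
have [_ _ El] := chain_props lm_RL lm_compat Ri t0.
have [_ _ Eu] := chain_props un_RL un_compat Ri t0.
have K q : q < t -> t - 1 - (t - 1 - q) = q by lia.
split.
- apply: weight_le; first by rewrite size_chain.
  move=> q; rewrite St => qt; rewrite nth_chain //.
  have [H _] := seq_iter Hs St Es Ri (k := t - 1 - q) ltac:(lia).
  by rewrite K in H.
- apply: weight_le; first by rewrite size_chain.
  move=> q; rewrite size_chain => qt; rewrite nth_chain //.
  have [_ H] := seq_iter Hs St Es Ri (k := t - 1 - q) ltac:(lia).
  by rewrite K in H.
- rewrite (gapE Es) (gapE El) nth_chain //; apply: lerB => //.
  have [H _] := seq_iter Hs St Es Ri (k := t - 1) ltac:(lia).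
  by rewrite subnn in H; rewrite subn0.
- rewrite (gapE Es) (gapE Eu) nth_chain //; apply: lerB => //.
  have [_ H] := seq_iter Hs St Es Ri (k := t - 1) ltac:(lia).
  by rewrite subnn in H; rewrite subn0.
Qed.

Lemma chain_mono x y t : RL x = t -> RL y = t -> (a x <= a y)%R ->
  (weight alpha (chain lm t x) <= weight alpha (chain lm t y))%R /\
  (weight alpha (chain un t x) <= weight alpha (chain un t y))%R.
Proof.
move=> Ex Ey axy; split; (apply: weight_le; first by rewrite !size_chain);
  move=> q; rewrite size_chain => qt; rewrite !nth_chain //;
  have [H1 H2] := mono_iter Ex Ey axy (k := t - 1 - q) ltac:(lia); done.
Qed.

Lemma mlists_spec : 0 < n ->
  (forall x, RL x <= mlists alpha) /\ exists j, RL j = mlists alpha.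
Proof.
move=> n0.
have [j0 Hj0] := bigop.eq_bigmax (fun j : 'I_n => RL j) (ltac:(by rewrite card_ord)).
set M := bigop.body _ _ _ in Hj0.
have Mub : forall x, RL x <= M.
  move=> x; case: (ltnP x n) => [xn | xn]; last by rewrite RL_out.
  exact: (@bigop.leq_bigmax _ (fun j : 'I_n => RL j) (Ordinal xn)).
have Mn : M <= n by rewrite Hj0; apply: RL_le_n.
have HM : mlists alpha = M.
  rewrite /mlists (@eq_in_filter _ _ (fun t => t <= M)); last first.
    move=> t; rewrite mem_iota => /andP[t1 _]; apply/idP/idP.
      case E: (L alpha t) => [|x l] //= _.
      have : x \in L alpha t by rewrite E mem_head.
      by rewrite mem_filter => /andP[/eqP <- _].
    move=> tM.
    have Rx : RL (iter (M - t) lm j0) = t.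
      rewrite (iter_RL lm_RL (esym Hj0)); lia.
    have : iter (M - t) lm j0 \in L alpha t.
      by rewrite mem_filter Rx eqxx mem_iota /= add0n RL_size // Rx.
    by case: (L alpha t).
  rewrite (_ : iota 1 n = iota 1 M ++ iota (1 + M) (n - M)); last by rewrite -iotaD subnKC.
  rewrite !size_filter count_cat (@eq_in_count _ _ predT); last first.
    by move=> t; rewrite mem_iota => /andP[_]; rewrite /= add1n ltnS.
  rewrite count_predT size_iota (@eq_in_count _ _ pred0) ?count_pred0 ?addn0 //.
  by move=> t; rewrite mem_iota => /andP[t1 _] /=; apply/negbTE; rewrite -ltnNge; rewrite add1n in t1.
rewrite HM; split => //; by exists j0.
Qed.

End S.

Local Open Scope ring_scope.

Theorem theorem6 (R : realDomainType) (alpha : seq R) :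
  (0 < size alpha)%N ->
  let a := itm alpha in
  let m := mlists alpha in
  (* (1) *)
  (forall (t i j : nat), i \in L alpha t -> j \in L alpha t -> a i < a j ->
     forall k : nat, (1 <= k < t)%N ->
       [/\ iter k (lm alpha) i \in L alpha (t - k),
           iter k (lm alpha) j \in L alpha (t - k),
           iter k (un alpha) i \in L alpha (t - k) &
           iter k (un alpha) j \in L alpha (t - k)] /\
       a (iter k (lm alpha) i) <= a (iter k (lm alpha) j) /\
       a (iter k (un alpha) i) <= a (iter k (un alpha) j)) /\
  (* (2) *)
  (forall (t i : nat) (s : seq nat), i \in L alpha t ->
     incr_sub alpha s -> size s = t -> ends_at s i ->
     forall k : nat, (k <= t - 1)%N ->
       let ik := nth 0%N s (t - 1 - k) in
       [/\ iter k (lm alpha) i \in L alpha (t - k),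
           ik \in L alpha (t - k),
           iter k (un alpha) i \in L alpha (t - k),
           a ik <= a (iter k (lm alpha) i) &
           a (iter k (un alpha) i) <= a ik]) /\
  (* (3) *)
  (forall i : nat, i \in L alpha m ->
     let slm := chain (lm alpha) m i in
     let sun := chain (un alpha) m i in
     [/\ incr_sub alpha slm /\ size slm = m /\ ends_at slm i,
         incr_sub alpha sun /\ size sun = m /\ ends_at sun i &
         forall s : seq nat, incr_sub alpha s -> size s = m -> ends_at s i ->
           [/\ weight alpha s <= weight alpha slm,
               gap alpha slm <= gap alpha s,
               weight alpha sun <= weight alpha s &
               gap alpha s <= gap alpha sun]]) /\
  (* (4) *)
  (let h := head 0%N (L alpha m) in
   let tl := last 0%N (L alpha m) in
   let slm := chain (lm alpha) m h in
   let sun := chain (un alpha) m tl in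
   [/\ incr_sub alpha slm,
       forall s, incr_sub alpha s -> (size s <= size slm)%N &
       forall s, incr_sub alpha s -> size s = size slm ->
                 weight alpha s <= weight alpha slm] /\
   [/\ incr_sub alpha sun,
       forall s, incr_sub alpha s -> (size s <= size sun)%N &
       forall s, incr_sub alpha s -> size s = size sun ->
                 weight alpha sun <= weight alpha s]).
Proof.
move=> n0 a m; rewrite /a /m {a m}.
have Lmem t x : (x \in L alpha t) = (x < size alpha)%N && (RL alpha x == t).
  by rewrite mem_filter mem_iota /= add0n andbC.
have LRL t x : x \in L alpha t -> RL alpha x = t /\ (0 < t)%N.
  by rewrite Lmem => /andP[xn /eqP <-]; split => //; apply: RL_pos.
have Lback t x : (0 < t)%N -> RL alpha x = t -> x \in L alpha t.
  by move=> t0 Rx; rewrite Lmem Rx eqxx RL_size ?Rx.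
have lmR := @lm_RL R alpha; have unR := @un_RL R alpha.
have lmC := @lm_compat R alpha; have unC := @un_compat R alpha.
split.
  move=> t i j Hi Hj aij k /andP[k1 kt].
  have [Ri t0] := LRL _ _ Hi; have [Rj _] := LRL _ _ Hj.
  have [H1 H2] := mono_iter Ri Rj (ltW aij) kt.
  have tk : (0 < t - k)%N by lia.
  split; last by [].
  by split; apply: Lback => //; apply: iter_RL.
split.
  move=> t i s Hi Hs St Es k kt.
  have [Ri t0] := LRL _ _ Hi.
  have [H1 H2] := seq_iter Hs St Es Ri kt.
  have tk : (0 < t - k)%N by lia.
  have Rk := seq_RL Hs St Es Ri (q := (t - 1 - k)%N) ltac:(lia).
  have kt' : (k < t)%N by lia.
  apply: And5 => //.
  - by apply: Lback => //; apply: iter_RL.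
  - by apply: Lback => //; rewrite Rk; lia.
  - by apply: Lback => //; apply: iter_RL.
have [Mub [j0 Rj0]] := mlists_spec n0.
split.
  move=> i Hi.
  have [Ri t0] := LRL _ _ Hi.
  have [Il Sl El] := chain_props lmR lmC Ri t0.
  have [Iu Su Eu] := chain_props unR unC Ri t0.
  apply: And3 => // s Hs St Es.
  by have [] := chain_best Ri Hs St Es.
have m0 : (0 < mlists alpha)%N.
  by apply: leq_trans (Mub 0%N); apply: RL_pos.
have j0L : j0 \in L alpha (mlists alpha) by apply: Lback.
have Lsort : sorted ltn (L alpha (mlists alpha)).
  exact: (sorted_filter ltn_trans _ (iota_ltn_sorted 0 _)).
set LL := L alpha (mlists alpha) in j0L Lsort *.
have hL : head 0%N LL \in LL by case: (LL) j0L => //= x l _; rewrite mem_head.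
have tL : last 0%N LL \in LL by case: (LL) j0L => //= x l _; rewrite mem_last.
have [Rh _] := LRL _ _ hL; have [Rt _] := LRL _ _ tL.
have [Il Sl El] := chain_props lmR lmC Rh m0.
have [Iu Su Eu] := chain_props unR unC Rt m0.
have Hsize s : incr_sub alpha s -> (size s <= mlists alpha)%N.
  case/lastP: s => [//|p x] Hs; apply: leq_trans (Mub x).
  by apply: (RL_ge Hs); rewrite /ends_at last_rcons eqxx; case: (p).
have Hend s : incr_sub alpha s -> size s = mlists alpha ->
    ends_at s (last 0%N s) /\ RL alpha (last 0%N s) = mlists alpha.
  move=> Hs St.
  have E : ends_at s (last 0%N s) by rewrite /ends_at eqxx andbT -size_eq0 St -lt0n.
  split => //; apply/eqP; rewrite eqn_leq Mub -{1}St; exact: (RL_ge Hs E).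
split; split.
- by [].
- by move=> s /Hsize; rewrite Sl.
- move=> s Hs; rewrite Sl => St; have [E Re] := Hend s Hs St.
  have [W _ _ _] := chain_best Re Hs St E.
  apply: le_trans W _.
  have eL : last 0%N s \in LL by apply: Lback.
  have he := head_min _ 0%N _ Lsort eL.
  have [W2 _] := chain_mono Re Rh (same_list_le (etrans Rh (esym Re)) (ltac:(rewrite Re //)) he).
  exact: W2.
- by [].
- by move=> s /Hsize; rewrite Su.
- move=> s Hs; rewrite Su => St; have [E Re] := Hend s Hs St.
  have [_ W _ _] := chain_best Re Hs St E.
  apply: le_trans W.
  have eL : last 0%N s \in LL by apply: Lback.
  have he := last_max _ 0%N _ Lsort eL.
  have [_ W2] := chain_mono Rt Re (same_list_le (etrans Re (esym Rt)) (ltac:(rewrite Rt //)) he).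
  exact: W2.
Qed.
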